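(* For integers $k\ge3$ and $n>k(k-1)$, $$\left(\frac nk\right)^k\left(1-e_k(n)\right)\le p(n,k)\le\left(\frac nk\right)^k,\qquad\text{where } e_k(n)=\frac{4}{27}\cdot\frac{k^3}{n^2}.$$
   Context: For integers $q>t>0$, $p(q,t)$ is the maximum of $\prod_{i=1}^t q_i$ over all partitions $q_1+\dots+q_t=q$ into nonnegative integers with each $q_i<q$ (this maximum is attained by an equitable partition, i.e. one with $|q_i-q_j|\le1$). *)

(* Defs.v *)
From mathcomp Require Import all_boot all_order all_algebra.
Set Implicit Arguments. Unset Strict Implicit. Unset Printing Implicit Defensive.

Definition pmax (q t : nat) : nat :=
  \max_(f : {ffun 'I_t -> 'I_q} | \sum_(i < t) (f i : nat) == q)
     \prod_(i < t) (f i : nat).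

(* Main.v *)
Require Import Defs.
From mathcomp Require Import all_boot all_order all_algebra.
Import Order.TTheory GRing.Theory Num.Theory.
From mathcomp Require Import lra ring zify.
Local Open Scope ring_scope.

Lemma Qpos (R : realFieldType) (u : R) : -1/8 <= u <= 1/8 ->
  0 <= 646 + 504*u - 420*u^+2 + 216*u^+3 - 63*u^+4 + 8*u^+5.
Proof.
move=> /andP[h1 h2].
have a2 : u^+2 <= 1/64 by nra.
have a0: 0 <= u^+2 by nra.
have a3 : -1/512 <= u^+3 by nra.
have a3' : u^+3 <= 1/512 by nra.
have a4 : u^+4 <= 1/4096 by nra.
have a5 : -1 <= u^+5 by nra.
have a0': 0 <= u^+4 by nra.
lra.
Qed.

Lemma zbound (R : realFieldType) (u : R) : -1/8 <= u <= 1/8 ->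
  1 - (36*u^+2 - 168*u^+3 + 1024*u^+4) <= (1-u)^+8 * (1 + 8*u).
Proof.
move=> hu; have h := @Qpos _ u hu.
rewrite -subr_ge0.
have -> : (1-u)^+8 * (1 + 8*u) - (1 - (36*u^+2 - 168*u^+3 + 1024*u^+4)) = u^+4 * (646 + 504*u - 420*u^+2 + 216*u^+3 - 63*u^+4 + 8*u^+5) by ring.
apply: mulr_ge0 => //.
by rewrite (_ : 4 = 2*2)%N // exprM sqr_ge0.
Qed.
Lemma onevar (R : realFieldType) (e : R) : 0 <= e <= 1 ->
  (1 - e^+2) * (972 + 243 * e + 972/49 * (1 + 3 * e^+2)) <= 1024.
Proof. move=> /andP[h1 h2]. nra. Qed.
Lemma final (R : realFieldType) (r m n : R) : 0 <= r -> 0 <= m -> 0 < n -> 0 < r + m -> 7*(r+m) <= 3*n ->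
  r * m * (972*n^+2 + 567*(r-m)*n + 432*(r^+2-r * m + m^+2)) <= 256*(r+m)^+2*n^+2.
Proof.
move=> hr hm hn hS hs.
set S := r + m.
have hsS : 7 * S <= 3 * n by exact: hs.
have hSS : 0 < S by exact: hS.
pose D := `|r - m|.
have hD2 : D^+2 = (r-m)^+2 by rewrite /D real_normK // num_real.
have hD0 : 0 <= D by rewrite /D normr_ge0.
have hDS : D <= S by rewrite /D /S ler_norml; apply/andP; split; lra.
have hrmD : r - m <= D by rewrite /D ler_norm.
pose e := D / S.
have hS0 : S != 0 by rewrite gt_eqF.
have hDe : D = e * S by rewrite /e divfK.
have he0 : 0 <= e by rewrite /e divr_ge0 // ltW.
have he1 : e <= 1 by rewrite /e ler_pdivrMr // mul1r.
have hC := @onevar _ e ltac:(by rewrite he0 he1).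
have h4rm : 4 * (r * m) = S^+2 * (1 - e^+2).
  have : 4 * (r * m) = S^+2 - D^+2 by rewrite hD2 /S; ring.
  by rewrite hDe => ->; ring.
have hsq : 4 * (r^+2 - r * m + m^+2) = S^+2 * (1 + 3 * e^+2).
  have : 4 * (r^+2 - r * m + m^+2) = S^+2 + 3 * D^+2 by rewrite hD2 /S; ring.
  by rewrite hDe => ->; ring.
have hB : 972*n^+2 + 567*(r-m)*n + 108 * (S^+2 * (1 + 3 * e^+2)) <=
          n^+2 * (972 + 243 * e + 972/49 * (1 + 3 * e^+2)).
  have t1 : 567*(r-m)*n <= 243 * e * n^+2.
    have h1 : (r - m) * n <= e * S * n by apply: ler_wpM2r; [exact: ltW | rewrite -hDe].
    have h2 : e * S * n <= e * (3/7 * n) * n.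
      apply: ler_wpM2r; first exact: ltW.
      apply: ler_wpM2l; [exact: he0 | lra].
    lra.
  have t2 : 108 * S^+2 <= 972/49 * n^+2 by nra.
  have t3 : 0 <= 1 + 3 * e^+2 by nra.
  nra.
have h1e : 0 <= 1 - e^+2 by nra.
have hS2 : 0 <= S^+2 by nra.
have hn2 : 0 <= n^+2 by nra.
have key : 4 * (r * m * (972*n^+2 + 567*(r-m)*n + 432*(r^+2-r * m + m^+2)))
   = S^+2 * (1 - e^+2) * (972*n^+2 + 567*(r-m)*n + 108 * (S^+2 * (1 + 3 * e^+2))).
  rewrite -hsq -[S^+2 * (1 - e^+2)]h4rm; ring.
suff : 4 * (r * m * (972*n^+2 + 567*(r-m)*n + 432*(r^+2-r * m + m^+2))) <= 4 * (256*S^+2*n^+2) by lra.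
rewrite key.
have := ler_wpM2l (mulr_ge0 hS2 h1e) hB.
move=> hh; apply: le_trans hh _.
have := ler_wpM2l (mulr_ge0 hS2 hn2) hC.
nra.
Qed.

Lemma sum_split (R : nmodType) (r m : nat) (F : bool -> R) :
  \sum_(i < r + m) F (i < r)%N = F true *+ r + F false *+ m.
Proof.
rewrite big_split_ord /=.
have -> : \sum_(i < r) F (lshift m i < r)%N = \sum_(i < r) F true.
  by apply: eq_bigr => i _; rewrite /= ltn_ord.
have -> : \sum_(i < m) F (rshift r i < r)%N = \sum_(i < m) F false.
  by apply: eq_bigr => i _; rewrite /= ltnNge leq_addr.
by rewrite !sumr_const !card_ord.
Qed.

Lemma prod_split (R : comPzSemiRingType) (r m : nat) (F : bool -> R) :
  \prod_(i < r + m) F (i < r)%N = F true ^+ r * F false ^+ m.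
Proof.
rewrite big_split_ord /=.
have -> : \prod_(i < r) F (lshift m i < r)%N = \prod_(i < r) F true.
  by apply: eq_bigr => i _; rewrite /= ltn_ord.
have -> : \prod_(i < m) F (rshift r i < r)%N = \prod_(i < m) F false.
  by apply: eq_bigr => i _; rewrite /= ltnNge leq_addr.
by rewrite !prodr_const !card_ord.
Qed.

Lemma amgm (R : realFieldType) (k : nat) (E : 'I_k -> R) : (0 < k)%N ->
  (forall i, 0 <= E i) -> \prod_(i < k) E i <= ((\sum_(i < k) E i) / k%:R) ^+ k.
Proof.
move=> hk hE.
have := (leif_AGM (A := predT) (E := E) (fun i _ => hE i)).1.
by rewrite /= cardT size_enum_ord.
Qed.

Lemma mul_ge (R : realFieldType) (A B Y1 Y2 : R) : 0 <= A -> 0 <= B ->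
  1 - Y1 <= A -> 1 - Y2 <= B -> 0 <= Y1 -> 0 <= Y2 -> 1 - (Y1 + Y2) <= A * B.
Proof.
move=> hA hB h1 h2 hy1 hy2.
case: (lerP 0 (1 - Y1)) => c1; last by nra.
case: (lerP 0 (1 - Y2)) => c2; last by nra.
nra.
Qed.

Lemma bern (R : realFieldType) (x y : R) (r : nat) : 0 <= x -> 1 - y <= x -> 0 <= y ->
  1 - r%:R * y <= x ^+ r.
Proof.
move=> hx hxy hy; elim: r => [|r IH]; first by rewrite mul0r subr0 expr0.
have h := @mul_ge _ x (x^+r) y (r%:R*y) hx (exprn_ge0 _ hx) hxy IH hy (mulr_ge0 (ler0n _ _) hy).
rewrite exprS -natr1; lra.
Qed.

Definition G (R : realFieldType) (u : R) : R := 36 * u ^+ 2 - 168 * u ^+ 3 + 1024 * u ^+ 4.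
Arguments G {R} u.

Lemma G_ge0 (R : realFieldType) (u : R) : -1/8 <= u <= 1/8 -> 0 <= G u.
Proof.
move=> /andP[h1 h2]; rewrite /G.
have h : 0 <= 36 - 168 * u + 1024 * u^+2 by nra.
have -> : 36*u^+2 - 168*u^+3 + 1024*u^+4 = u^+2 * (36 - 168 * u + 1024 * u^+2) by ring.
by apply: mulr_ge0 => //; apply: sqr_ge0.
Qed.

Lemma realcore (R : realFieldType) (r m : nat) (N : R) :
  (0 < r + m)%N -> 0 < N -> m%:R <= N -> r%:R <= N -> 7 * (r%:R + m%:R) <= 3 * N ->
  1 - 4%:R/27%:R * ((r%:R+m%:R)^+3 / N^+2) <= (1 + m%:R / N)^+r * (1 - r%:R/N)^+m.
Proof.
move=> hk hN hmN hrN h7.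
have hN0 : N != 0 by rewrite gt_eqF.
have hr0 : 0 <= (r%:R : R) by [].
have hm0 : 0 <= (m%:R : R) by [].
pose al := m%:R / (8 * N).
pose be := r%:R / (8 * N).
have hal0 : 0 <= al by rewrite /al; apply: divr_ge0 => //; lra.
have hal1 : al <= 1/8 by rewrite /al ler_pdivrMr; lra.
have hbe0 : 0 <= be by rewrite /be; apply: divr_ge0 => //; lra.
have hbe1 : be <= 1/8 by rewrite /be ler_pdivrMr; lra.
have hal : -1/8 <= al <= 1/8 by apply/andP; split; lra.
have hbe : -1/8 <= - be <= 1/8 by apply/andP; split; lra.
have hX : (1 + m%:R / N)^+r * (1 - r%:R/N)^+m = (1 + 8 * al)^+r * (1 - 8 * be)^+m.
  by congr (_ ^+ _ * _ ^+ _); rewrite /al /be; field.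
rewrite hX.
have hb8 : 0 <= 1 - 8 * be by move: hbe => /andP[? ?]; lra.
have ha8 : 0 <= 1 + 8 * al by move: hal => /andP[? ?]; lra.
have hX0 : 0 <= (1 + 8 * al)^+r * (1 - 8 * be)^+m by apply: mulr_ge0; apply: exprn_ge0.
have hP : (1 - al)^+r * (1 - - be)^+m <= 1.
  have := @amgm R (r + m) (fun i => (fun b : bool => if b then 1 - al else 1 - - be) (i < r)%N) hk.
  rewrite (prod_split _ r m (fun b : bool => if b then 1 - al else 1 - - be)).
  rewrite (sum_split _ r m (fun b : bool => if b then 1 - al else 1 - - be)) /=.
  have -> : ((1 - al) *+ r + (1 - - be) *+ m) / (r + m)%:R = 1 :> R.
    have e1 : al * r%:R = be * m%:R.
      by rewrite /al /be mulrAC [X in _ = X]mulrAC (mulrC m%:R r%:R).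
    have -> : (1 - al) *+ r + (1 - - be) *+ m = (r + m)%:R :> R.
      rewrite -(mulr_natr (1 - al)) -(mulr_natr (1 - - be)) natrD mulrBl mulrDl !mul1r opprK e1; ring.
    by rewrite divff // pnatr_eq0 -lt0n.
  rewrite expr1n; apply.
  case=> i hi /=; case: ifP => _; move: hal hbe => /andP[? ?] /andP[? ?]; lra.
have hP0 : 0 <= (1 - al)^+r * (1 - - be)^+m.
  move: hal hbe => /andP[? ?] /andP[? ?].
  by apply: mulr_ge0; apply: exprn_ge0; lra.
pose z1 := (1 - al)^+8 * (1 + 8 * al).
pose z2 := (1 - - be)^+8 * (1 + 8 * - be).
have hZ : z1 ^+ r * z2 ^+ m = (1 + 8 * al)^+r * (1 - 8 * be)^+m * ((1 - al)^+r * (1 - - be)^+m)^+8.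
  rewrite /z1 /z2 mulrN !exprMn.
  move: ((1 - al) ^+ r) ((1 - - be) ^+ m) ((1 + 8 * al) ^+ r) ((1 - 8 * be) ^+ m) => A B C D; ring.
have hZX : z1 ^+ r * z2 ^+ m <= (1 + 8 * al)^+r * (1 - 8 * be)^+m.
  rewrite hZ; apply: ler_piMr => //.
  by apply: exprn_ile1.
have hz1 := @zbound _ al hal.
have hz2 := @zbound _ (- be) hbe.
have hz1' : 1 - G al <= z1 by [].
have hz2' : 1 - G (- be) <= z2 by [].
have hz10 : 0 <= z1 by rewrite /z1; apply: mulr_ge0 => //; apply: exprn_ge0; move: hal => /andP[? ?]; lra.
have hz20 : 0 <= z2 by rewrite /z2; apply: mulr_ge0; [apply: exprn_ge0; move: hbe => /andP[? ?]; lra | lra].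
have hG1 := @G_ge0 _ _ hal.
have hG2 := @G_ge0 _ _ hbe.
have hB1 := @bern _ _ _ r hz10 hz1' hG1.
have hB2 := @bern _ _ _ m hz20 hz2' hG2.
have hM := @mul_ge _ _ _ _ _ (exprn_ge0 r hz10) (exprn_ge0 m hz20) hB1 hB2 (mulr_ge0 hr0 hG1) (mulr_ge0 hm0 hG2).
have hF := @final R r%:R m%:R N hr0 hm0 hN _ h7.
have hS : 0 < r%:R + m%:R :> R by rewrite -natrD ltr0n.
have hF' := hF hS.
have hsum : r%:R * G al + m%:R * G (- be) <= 4%:R / 27%:R * ((r%:R + m%:R)^+3 / N^+2).
  have e1 : r%:R * G al + m%:R * G (- be) = (r%:R + m%:R) * (r%:R * m%:R *
    (972 * N ^+ 2 + 567 * (r%:R - m%:R) * N +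
     432 * (r%:R ^+ 2 - r%:R * m%:R + m%:R ^+ 2))) / (1728 * N^+4).
    by rewrite /G /al /be; field.
  have e2 : 4%:R / 27%:R * ((r%:R + m%:R)^+3 / N^+2) = (r%:R + m%:R) *
    (256 * (r%:R + m%:R) ^+ 2 * N ^+ 2) / (1728 * N^+4) :> R.
    by field.
  rewrite e1 e2; apply: ler_wpM2r.
    by rewrite invr_ge0; apply: mulr_ge0 => //; apply: exprn_ge0; apply: ltW.
  by apply: ler_wpM2l => //; apply: ltW.
apply: le_trans hZX; apply: le_trans hM.
by rewrite lerD2l lerN2.
Qed.

Lemma sum_split_nat (r m : nat) (F : bool -> nat) :
  (\sum_(i < r + m) F (i < r)%N = r * F true + m * F false)%N.
Proof.
rewrite big_split_ord /=.
have -> : (\sum_(i < r) F (lshift m i < r)%N = \sum_(i < r) F true)%N.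
  by apply: eq_bigr => i _; rewrite /= ltn_ord.
have -> : (\sum_(i < m) F (rshift r i < r)%N = \sum_(i < m) F false)%N.
  by apply: eq_bigr => i _; rewrite /= ltnNge leq_addr.
by rewrite !sum_nat_const !card_ord.
Qed.

Lemma prod_split_nat (r m : nat) (F : bool -> nat) :
  (\prod_(i < r + m) F (i < r)%N = F true ^ r * F false ^ m)%N.
Proof.
rewrite big_split_ord /=.
have -> : (\prod_(i < r) F (lshift m i < r)%N = \prod_(i < r) F true)%N.
  by apply: eq_bigr => i _; rewrite /= ltn_ord.
have -> : (\prod_(i < m) F (rshift r i < r)%N = \prod_(i < m) F false)%N.
  by apply: eq_bigr => i _; rewrite /= ltnNge leq_addr.
by rewrite !prod_nat_const !card_ord.
Qed.

Theorem lemma4p4 (R : realFieldType) (k n : nat) :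
  (3 <= k)%N -> (k * (k - 1) < n)%N ->
  (n%:R / k%:R) ^+ k * (1 - (4%:R / 27%:R) * (k%:R ^+ 3 / n%:R ^+ 2))
    <= (pmax n k)%:R :> R
  /\ (pmax n k)%:R <= (n%:R / k%:R) ^+ k :> R.
Proof.
move=> hk hn.
have hk0 : (0 < k)%N by lia.
have en := divn_eq n k.
have hr := ltn_pmod n hk0.
move: (n %/ k)%N (n %% k)%N en hr => q r en hr.
subst n.
have [m hm] : exists m, k = (r + m)%N by exists (k - r)%N; rewrite subnKC // ltnW.
subst k.
have hK : 0 < (r + m)%:R :> R by rewrite ltr0n.
have hN : 0 < (q * (r + m) + r)%:R :> R by rewrite ltr0n; lia.
split; last first.
  rewrite /pmax.
  apply: (big_ind (fun x : nat => x%:R <= ((q * (r + m) + r)%:R / (r + m)%:R) ^+ (r + m) :> R)).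
  - by apply: exprn_ge0; apply: divr_ge0; apply: ltW.
  - by move=> x y hx hy; rewrite /maxn; case: ifP.
  move=> f hf.
  rewrite natr_prod.
  have := @amgm R _ (fun i => (f i : nat)%:R) hk0 (fun i => ler0n _ _).
  by rewrite -natr_sum (eqP hf).
have hlt : forall b : bool, ((if b then q.+1 else q) < q * (r + m) + r)%N.
  by case; nia.
pose f0 : {ffun 'I_(r + m) -> 'I_(q * (r + m) + r)} := [ffun i : 'I_(r + m) => Ordinal (hlt (i < r)%N)].
have hf0 : forall i, (f0 i : nat) = (fun b : bool => if b then q.+1 else q) (i < r)%N.
  by move=> i; rewrite ffunE.
have hsum : (\sum_(i < r + m) (f0 i : nat) == q * (r + m) + r)%N.
  rewrite (eq_bigr _ (fun i _ => hf0 i)) (sum_split_nat r m (fun b : bool => if b then q.+1 else q)) /=.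
  apply/eqP; ring.
have hprod : (\prod_(i < r + m) (f0 i : nat) = q.+1 ^ r * q ^ m)%N.
  by rewrite (eq_bigr _ (fun i _ => hf0 i)) (prod_split_nat r m (fun b : bool => if b then q.+1 else q)).
have hmax : (q.+1 ^ r * q ^ m <= pmax (q * (r + m) + r) (r + m))%N.
  rewrite -hprod /pmax.
  exact: (@leq_bigmax_cond _ (fun f : {ffun 'I_(r + m) -> 'I_(q * (r + m) + r)} =>
     (\sum_(i < r + m) (f i : nat) == q * (r + m) + r)%N)
     (fun f => \prod_(i < r + m) (f i : nat))%N f0 hsum).
apply: le_trans (_ : ((q.+1 ^ r * q ^ m)%N)%:R <= _); last by rewrite ler_nat.
rewrite natrM !natrX.
have eN : (q * (r + m) + r)%:R = q%:R * (r%:R + m%:R) + r%:R :> R.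
  by rewrite natrD natrM natrD.
have hN0 : q%:R * (r%:R + m%:R) + r%:R != 0 :> R by rewrite -eN gt_eqF.
have hK0 : r%:R + m%:R != 0 :> R by rewrite -natrD gt_eqF.
have e1 : (q.+1)%:R = (q * (r + m) + r)%:R / (r + m)%:R * (1 + m%:R / (q * (r + m) + r)%:R) :> R.
  rewrite eN natrD -natr1; field.
  by rewrite hN0 hK0.
have e2 : q%:R = (q * (r + m) + r)%:R / (r + m)%:R * (1 - r%:R / (q * (r + m) + r)%:R) :> R.
  rewrite eN natrD; field.
  by rewrite hN0 hK0.
rewrite [X in _ <= X ^+ r * _]e1 [X in _ <= _ * X ^+ m]e2.
have hA : 0 <= (q * (r + m) + r)%:R / (r + m)%:R :> R by apply: divr_ge0; apply: ltW.
move: hA; move: ((q * (r + m) + r)%:R / (r + m)%:R) => A hA.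
rewrite !exprMn exprD [X in _ <= X]mulrACA.
apply: ler_wpM2l; first by apply: mulr_ge0; apply: exprn_ge0.
have hmN : m%:R <= (q * (r + m) + r)%:R :> R by rewrite ler_nat; nia.
have hrN : r%:R <= (q * (r + m) + r)%:R :> R by rewrite ler_nat; nia.
have h7 : 7 * (r%:R + m%:R) <= 3 * (q * (r + m) + r)%:R :> R.
  have h7n : (7 * (r + m) <= 3 * (q * (r + m) + r))%N by nia.
  by rewrite -natrD -!natrM ler_nat.
have := @realcore R r m _ hk0 hN hmN hrN h7.
by rewrite -natrD.
Qed.
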